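(* Fix a class $c$ and an unlabeled node $v_u$ whose true class is $c$. Suppose $v_u$ has $n\ge0$ unlabeled neighbors and $m\ge0$ labeled neighbors, with $m+n\ge1$, and let $p$ be the probability that an existing linked labeled neighbor is labeled as $c$. Each node $v_j$ carries a score $s_{jc}$ (predicted probability of class $c$ before the final aggregation) whose expectation depends only on its type: $\mu_a=\mathbb{E}(s_{ac})$ for unlabeled nodes, $\mu_b=\mathbb{E}(s_{bc})$ for labeled nodes whose given label is $c$, $\mu_d=\mathbb{E}(s_{dc})$ for labeled nodes whose given label is not $c$, and $\mu_p=\mathbb{E}(s_{pc})$ for nodes $v_p$ provided with a pseudo label. The prediction for $v_u$ is $y_{uc}=\frac{1}{d_u}\sum_{j\in\mathcal{N}(v_u)}s_{jc}$, the average over its $d_u$ neighbors. If $\mu_p>\max\bigl(\mu_a,\;p\mu_b+(1-p)\mu_d\bigr)$, then linking $v_u$ with pseudo-labeled nodes improves its expected predicted probability of class $c$: letting $y^{(k)}_{uc}$ be the prediction after additionally linking $v_u$ with $k$ pseudo-labeled nodes (average over $m+n+k$ neighbors), $\mathbb{E}(y^{(k)}_{uc})>\mathbb{E}(y_{uc})$ for every $k\ge1$, and $\mathbb{E}(y^{(k)}_{uc})$ is strictly increasing in $k$.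
   Context: Setting: semi-supervised node classification with a trained graph convolutional network on a graph with a small set of noisily labeled nodes, extended with a set of unlabeled nodes given pseudo labels. Final predictions are $\mathbf{Y}=\tilde{\mathbf{A}}\mathbf{S}$ with $s_{ic}$ (entries of the last-layer pre-aggregation output $\mathbf{S}$) treated as the predicted probability that $v_i$ belongs to class $c$; the simplified aggregation is the plain average over neighbors. Expectations are over the random label noise and scores; the expected prediction before linking is $\mathbb{E}(y_{uc})=\frac{n\mu_a+pm\mu_b+(1-p)m\mu_d}{m+n}$. *)

(* Defs.v *)
From mathcomp Require Import all_boot all_order all_algebra.
Set Implicit Arguments. Unset Strict Implicit. Unset Printing Implicit Defensive.
Import Order.TTheory GRing.Theory Num.Theory.
Local Open Scope ring_scope.

Inductive ntype := Unlabeled | Labeled | Pseudo.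

(* A labeled neighbour
   carries the (noisy) label c with probability p (expected score mu_b) and a
   label different from c with probability 1-p (expected score mu_d). *)
Definition escore (R : realFieldType) (mu_a mu_b mu_d mu_p p : R) (t : ntype) : R :=
  match t with
  | Unlabeled => mu_a
  | Labeled => p * mu_b + (1 - p) * mu_d
  | Pseudo => mu_p
  end.

Definition nbhd (n m k : nat) : seq ntype :=
  nseq n Unlabeled ++ nseq m Labeled ++ nseq k Pseudo.

(* Expected prediction E(y^{(k)}_uc) = E((1/d_u) * sum_{j in N(v_u)} s_jc)
   = (1/d_u) * sum_j E(s_jc), by linearity of expectation. *)
Definition exp_pred (R : realFieldType) (mu_a mu_b mu_d mu_p p : R)
    (n m k : nat) : R :=
  (\sum_(t <- nbhd n m k) escore mu_a mu_b mu_d mu_p p t)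
    / (size (nbhd n m k))%:R.

(* Main.v *)
Require Import Defs.
From mathcomp Require Import all_boot all_order all_algebra.
From mathcomp Require Import ring lra.
Import Order.TTheory GRing.Theory Num.Theory.
Local Open Scope ring_scope.

Lemma iter_add (R : realFieldType) (x : R) (n : nat) :
  iter n (+%R x) 0 = n%:R * x.
Proof. elim: n => [|n IH] /=; first by rewrite mul0r. by rewrite IH -addn1 natrD; ring. Qed.

Lemma exp_predE (R : realFieldType) (mu_a mu_b mu_d mu_p p : R) (n m k : nat) :
  exp_pred mu_a mu_b mu_d mu_p p n m k =
  (n%:R * mu_a + m%:R * (p * mu_b + (1 - p) * mu_d) + k%:R * mu_p)
   / (n%:R + m%:R + k%:R).
Proof.
rewrite /exp_pred /nbhd !big_cat !big_nseq !iter_add /= !size_cat !size_nseq !natrD.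
by rewrite addrA addrA.
Qed.

Theorem theorem2 (R : realFieldType) (mu_a mu_b mu_d mu_p p : R) (n m : nat) :
  0 <= p <= 1 ->
  (1 <= m + n)%N ->
  Num.max mu_a (p * mu_b + (1 - p) * mu_d) < mu_p ->
  (forall k : nat, (1 <= k)%N ->
     exp_pred mu_a mu_b mu_d mu_p p n m 0 < exp_pred mu_a mu_b mu_d mu_p p n m k) /\
  (forall k1 k2 : nat, (k1 < k2)%N ->
     exp_pred mu_a mu_b mu_d mu_p p n m k1 < exp_pred mu_a mu_b mu_d mu_p p n m k2).
Proof.
move=> _ hmn; rewrite gt_max => /andP[ha hl].
set L := p * mu_b + (1 - p) * mu_d in hl *.
have mono : forall k1 k2 : nat, (k1 < k2)%N ->
     exp_pred mu_a mu_b mu_d mu_p p n m k1 < exp_pred mu_a mu_b mu_d mu_p p n m k2.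
  move=> k1 k2 hk; rewrite !exp_predE -/L.
  have hN : 1 <= m%:R + n%:R :> R by rewrite -natrD ler1n.
  have hk' : (k1.+1)%:R <= k2%:R :> R by rewrite ler_nat.
  rewrite -addn1 natrD in hk'.
  have h0n : 0 <= n%:R :> R by [].
  have h0m : 0 <= m%:R :> R by [].
  have h01 : 0 <= k1%:R :> R by [].
  have P1 : 0 < n%:R + m%:R + k1%:R :> R by lra.
  have P2 : 0 < n%:R + m%:R + k2%:R :> R by lra.
  rewrite ltr_pdivrMr // mulrAC ltr_pdivlMr //.
  have D : 0 < n%:R * (mu_p - mu_a) + m%:R * (mu_p - L) :> R.
    have he : 0 < Num.min (mu_p - mu_a) (mu_p - L) by rewrite lt_min; apply/andP; split; lra.
    set e := Num.min _ _ in he.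
    have e1 : e <= mu_p - mu_a by rewrite /e ge_min lexx.
    have e2 : e <= mu_p - L by rewrite /e ge_min lexx orbT.
    have f1 : n%:R * e <= n%:R * (mu_p - mu_a) by rewrite ler_wpM2l.
    have f2 : m%:R * e <= m%:R * (mu_p - L) by rewrite ler_wpM2l.
    have f3 : e <= (m%:R + n%:R) * e by rewrite ler_peMl // ltW.
    lra.
  have E : 0 < (k2%:R - k1%:R) * (n%:R * (mu_p - mu_a) + m%:R * (mu_p - L)) :> R.
    apply: mulr_gt0 => //; lra.
  nra.
split => // k hk; exact: mono.
Qed.
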